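(* Let $m, E, D, A_c, A, L, d, \varepsilon_0$ be positive constants and $V_{DC}\ge 0$. Consider the initial value problem \[ m\ddot{x}+EA_c\frac{x}{L}-DA_c\left|\frac{x}{L}\right|\frac{x}{L}=\frac{\varepsilon_0 A V_{DC}^2}{2(d-x)^2},\qquad x(0)=0,\quad \dot{x}(0)=0, \] with $x<d$. Let $\alpha=\frac{Dd}{EL}$, $\mu=\sqrt{4\alpha^2-6\alpha+9}$ and \[ \kappa(\alpha)=\frac{(2\alpha+3-\mu)(-4\alpha^2+24\alpha-9+2\alpha\mu+3\mu)}{648\alpha^2}. \] Then the pull-in voltage of this model is \[ V_{pull-in}=\sqrt{\frac{2E A_c d^3\kappa(\alpha)}{\varepsilon_0 A L}}. \]
   Context: The equation models a plate of mass $m$ and area $A$ attached to a graphene strip of length $L$ and cross-sectional area $A_c$ (Young's modulus $E$, second-order elastic stiffness constant $D$), actuated by a DC voltage $V_{DC}$ across a gap $d$ to a fixed parallel substrate plate, with electric permittivity constant $\varepsilon_0$; $x$ is the displacement of the plate toward the substrate. ''Pull-in'' means that the solution $x(t)$ reaches $x=d$ (the plate touches the substrate) in finite time. The pull-in voltage is the threshold value of $V_{DC}$ such that the initial value problem has a periodic solution if $V_{DC}\le V_{pull-in}$ and pull-in occurs if $V_{DC}> V_{pull-in}$. *)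

(* Defs.v *)
From Stdlib Require Import Reals.
From Coquelicot Require Import Coquelicot.
Open Scope R_scope.

Definition ode_at (m E D Ac A L d eps0 V : R) (x v a : R -> R) (t : R) : Prop :=
  x t < d /\ is_derive x t (v t) /\ is_derive v t (a t) /\
  m * a t + E * Ac * (x t / L) - D * Ac * Rabs (x t / L) * (x t / L)
    = eps0 * A * V ^ 2 / (2 * (d - x t) ^ 2).

Definition ivp_solution_on (m E D Ac A L d eps0 V : R) (lo hi : Rbar)
  (x : R -> R) : Prop :=
  x 0 = 0 /\
  exists v a : R -> R, v 0 = 0 /\
    forall t : R, Rbar_lt lo (Finite t) -> Rbar_lt (Finite t) hi ->
      ode_at m E D Ac A L d eps0 V x v a t.

Definition global_solution (m E D Ac A L d eps0 V : R) (x : R -> R) : Prop :=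
  ivp_solution_on m E D Ac A L d eps0 V m_infty p_infty x.

Definition periodic_solution (m E D Ac A L d eps0 V : R) (x : R -> R) : Prop :=
  global_solution m E D Ac A L d eps0 V x /\
  exists p : R, 0 < p /\ forall t : R, x (t + p) = x t.

Definition pull_in (m E D Ac A L d eps0 V : R) : Prop :=
  exists (lo T : R) (x : R -> R), lo < 0 < T /\
    ivp_solution_on m E D Ac A L d eps0 V (Finite lo) (Finite T) x /\
    filterlim x (at_left T) (locally d).

Definition alpha_par (E D L d : R) : R := D * d / (E * L).

Definition kappa (al : R) : R :=
  let mu := sqrt (4 * al ^ 2 - 6 * al + 9) in
  (2 * al + 3 - mu) * (- 4 * al ^ 2 + 24 * al - 9 + 2 * al * mu + 3 * mu)
    / (648 * al ^ 2).

Definition V_pull_in (m E D Ac A L d eps0 : R) : R :=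
  sqrt (2 * E * Ac * d ^ 3 * kappa (alpha_par E D L d) / (eps0 * A * L)).

(* Main.v *)
Require Import Defs.
From Stdlib Require Import Reals Lra Psatz Ranalysis5 ClassicalEpsilon.
From Coquelicot Require Import Coquelicot.
Open Scope R_scope.

Definition hh (al y : R) : R := (1 - y) * (y - 2 * al * y ^ 2 / 3).
Definition hd (al z : R) : R := 2 * al * z ^ 2 - (2 + 4 * al / 3) * z + 1.
Definition muf (al : R) : R := sqrt (4 * al ^ 2 - 6 * al + 9).
Definition ys (al : R) : R := (2 * al + 3 - muf al) / (6 * al).
Definition yss (al : R) : R := (2 * al + 3 + muf al) / (6 * al).
Definition y3 (al : R) : R := (3 + 2 * al + 2 * muf al) / (6 * al).

Lemma hh_poly al y : hh al y = 2 * al / 3 * y ^ 3 - (1 + 2 * al / 3) * y ^ 2 + 1 * y.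
Proof. unfold hh. field. Qed.

Lemma div_lt_l a b c : 0 < c -> a < b * c -> a / c < b.
Proof. intros hc h. apply (Rmult_lt_reg_r c); auto.
  replace (a / c * c) with a by (field; lra). lra. Qed.
Lemma div_lt_r a b c : 0 < c -> b * c < a -> b < a / c.
Proof. intros hc h. apply (Rmult_lt_reg_r c); auto.
  replace (a / c * c) with a by (field; lra). lra. Qed.

Lemma cubic_fact A B C s t y :
  B = A * (2 * s + t) -> C = A * (s ^ 2 + 2 * s * t) ->
  (A * s ^ 3 - B * s ^ 2 + C * s) - (A * y ^ 3 - B * y ^ 2 + C * y) = A * (s - y) ^ 2 * (t - y).
Proof. intros -> ->. ring. Qed.

Lemma quad_fact A B C s u z :
  B = A * (s + u) -> C = A * s * u ->
  A * z ^ 2 - B * z + C = A * (z - s) * (z - u).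
Proof. intros -> ->. ring. Qed.

Section Al.
Variable al : R.
Hypothesis hal : 0 < al.

Lemma mu_sq : muf al ^ 2 = 4 * al ^ 2 - 6 * al + 9.
Proof. unfold muf. rewrite pow2_sqrt; [ring | nra]. Qed.

Lemma mu_pos : 0 < muf al.
Proof. unfold muf. apply sqrt_lt_R0. nra. Qed.

Lemma C1 : 1 + 2 * al / 3 = 2 * al / 3 * (2 * ys al + y3 al).
Proof. unfold ys, y3. field. lra. Qed.

Lemma C2 : 1 = 2 * al / 3 * (ys al ^ 2 + 2 * ys al * y3 al).
Proof.
  unfold ys, y3.
  transitivity (((2*al+3)^2 - muf al ^ 2) / (18 * al)).
  - rewrite mu_sq. field. lra.
  - field. lra.
Qed.

Lemma hh_fact y : hh al (ys al) - hh al y = 2 * al / 3 * (ys al - y) ^ 2 * (y3 al - y).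
Proof. rewrite !hh_poly. apply cubic_fact. apply C1. apply C2. Qed.

Lemma hd_fact z : hd al z = 2 * al * (z - ys al) * (z - yss al).
Proof.
  unfold hd. rewrite <- (quad_fact (2*al) (2 + 4*al/3) 1 (ys al) (yss al) z). ring.
  - unfold ys, yss. field. lra.
  - unfold ys, yss.
    transitivity (((2*al+3)^2 - muf al ^ 2) / (18 * al)).
    + rewrite mu_sq. field. lra.
    + field. lra.
Qed.

Lemma ys_pos : 0 < ys al.
Proof. unfold ys. assert (h := mu_sq). assert (h' := mu_pos).
  apply Rdiv_lt_0_compat; nra. Qed.

Lemma ys_lt1 : ys al < 1.
Proof. unfold ys. assert (h := mu_sq). assert (h' := mu_pos).
  assert (2*al+3-muf al < 6*al) by nra.
  apply div_lt_l; lra. Qed.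

Lemma ys_lt_yss : ys al < yss al.
Proof. unfold ys, yss. assert (h' := mu_pos).
  unfold Rdiv. apply Rmult_lt_compat_r. apply Rinv_0_lt_compat; lra. lra. Qed.

Lemma y3_gt1 : 1 < y3 al.
Proof. unfold y3. assert (h := mu_sq). assert (h' := mu_pos).
  assert (6*al < 3 + 2*al + 2*muf al) by nra.
  apply div_lt_r; lra. Qed.

Lemma hh_le y : 0 <= y <= 1 -> hh al y <= hh al (ys al).
Proof. intro hy. assert (h := hh_fact y). assert (h1 := y3_gt1).
  assert (0 <= 2 * al / 3 * (ys al - y) ^ 2 * (y3 al - y)).
  { apply Rmult_le_pos. apply Rmult_le_pos. lra. apply pow2_ge_0. lra. }
  lra. Qed.

Lemma hhs_pos : 0 < hh al (ys al).
Proof. assert (h := hh_fact 0). assert (h1 := y3_gt1). assert (h2 := ys_pos).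
  assert (hh al 0 = 0) by (unfold hh; field).
  assert (0 < 2 * al / 3 * (ys al - 0) ^ 2 * (y3 al - 0)).
  { apply Rmult_lt_0_compat. apply Rmult_lt_0_compat. lra.
    apply pow_lt; lra. lra. }
  lra. Qed.

Lemma hd_pos z : z < ys al -> 0 < hd al z.
Proof. intro hz. rewrite hd_fact. assert (h := ys_lt_yss).
  assert (0 < (ys al - z) * (yss al - z)) by (apply Rmult_lt_0_compat; lra). nra. Qed.

End Al.

Lemma kappa_hh al : 0 < al -> kappa al = hh al (ys al) / 2.
Proof.
  intro hal. assert (h := mu_sq al hal).
  unfold kappa. fold (muf al).
  assert (key : (1 - ys al) * (1 - 2 * al * ys al / 3)
     = (- 4 * al ^ 2 + 24 * al - 9 + 2 * al * muf al + 3 * muf al) / (54 * al)).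
  { transitivity ((4*al-3+muf al)*(6-2*al+muf al)/(54*al)).
    - unfold ys. field. lra.
    - replace ((4*al-3+muf al)*(6-2*al+muf al)) with
        (-8*al^2+30*al-18+2*al*muf al+3*muf al + muf al ^ 2) by ring.
      rewrite h. f_equal. ring. }
  replace (hh al (ys al)) with (ys al * ((1 - ys al) * (1 - 2 * al * ys al / 3)))
    by (unfold hh; field).
  rewrite key. unfold ys. field. lra.
Qed.

Lemma incr_of_deriv (tau k : R -> R) (a b : R) :
  (forall s, is_derive tau s (k s)) ->
  (forall s, a < s < b -> 0 < k s) ->
  forall x y, a <= x -> x < y -> y <= b -> tau x < tau y.
Proof.
  intros Hd Hk x y hx hxy hy.
  destruct (MVT_cor2 tau k x y hxy) as [c [Hc1 Hc2]].
  { intros c _. apply is_derive_Reals. apply Hd. }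
  assert (0 < k c) by (apply Hk; lra).
  assert (0 < k c * (y - x)) by (apply Rmult_lt_0_compat; lra). lra.
Qed.

Lemma inv_deriv (tau k psi : R -> R) (a b t : R) :
  a < b ->
  (forall s, is_derive tau s (k s)) ->
  (forall x y, a <= x -> x < y -> y <= b -> tau x < tau y) ->
  (forall s, tau a <= s <= tau b -> a <= psi s <= b /\ tau (psi s) = s) ->
  tau a < t < tau b -> k (psi t) <> 0 ->
  is_derive psi t (/ k (psi t)).
Proof.
  intros hab Hd Hinc Hpsi ht hk.
  assert (Hder : forall s, derivable_pt tau s).
  { intro s. exists (k s). apply is_derive_Reals. apply Hd. }
  assert (Hinj : forall x y, a <= x <= b -> a <= y <= b -> tau x = tau y -> x = y).
  { intros x y hx hy e. destruct (Rtotal_order x y) as [h|[h|h]]; auto.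
    - specialize (Hinc x y ltac:(lra) h ltac:(lra)). lra.
    - specialize (Hinc y x ltac:(lra) h ltac:(lra)). lra. }
  assert (Hta : tau a < tau b) by (apply Hinc; lra).
  assert (Ea : psi (tau a) = a).
  { destruct (Hpsi (tau a) ltac:(lra)) as [h1 h2]. apply Hinj; auto; lra. }
  assert (Eb : psi (tau b) = b).
  { destruct (Hpsi (tau b) ltac:(lra)) as [h1 h2]. apply Hinj; auto; lra. }
  assert (Hc : continuity_pt psi t).
  { apply (continuity_pt_recip_interv tau psi a b hab).
    - intros; apply Hinc; auto.
    - intros x h1 h2. unfold comp, id. apply Hpsi; lra.
    - intros x h1 h2. apply Hpsi; lra.
    - intros s _. apply derivable_continuous_pt. apply Hder.
    - exact ht. }
  assert (Hpt : psi (tau a) <= psi t <= psi (tau b)).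
  { rewrite Ea, Eb. apply Hpsi. lra. }
  pose (Prf := fun (s : R) (_ : psi (tau a) <= s <= psi (tau b)) => Hder s).
  assert (HH := derivable_pt_lim_recip_interv tau psi (tau a) (tau b) t Prf Hc Hta ht Hpt).
  assert (Edp : derive_pt tau (psi t) (Prf (psi t) Hpt) = k (psi t)).
  { apply derive_pt_eq_0. apply is_derive_Reals. apply Hd. }
  rewrite Edp in HH.
  apply is_derive_Reals.
  replace (/ k (psi t)) with (1 / k (psi t)) by (field; auto).
  apply HH.
  - intros x hx. unfold comp, id. apply Hpsi. lra.
  - exact hk.
Qed.

Lemma prim_deriv (k : R -> R) :
  (forall s, continuous k s) ->
  forall s, is_derive (fun u => RInt k 0 u) s (k s).
Proof.
  intros Hk s. apply is_derive_RInt with (a := 0).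
  - apply filter_forall. intro u. apply RInt_correct.
    apply ex_RInt_continuous. intros; apply Hk.
  - apply Hk.
Qed.

Lemma lower_lin (tau k : R -> R) (c : R) :
  (forall s, is_derive tau s (k s)) -> (forall s, c <= k s) -> tau 0 = 0 ->
  forall s, (0 <= s -> c * s <= tau s) /\ (s <= 0 -> tau s <= c * s).
Proof.
  intros Hd Hk H0 s.
  assert (Hg : forall x y, x < y -> tau x - c * x <= tau y - c * y).
  { intros x y hxy.
    destruct (MVT_cor2 (fun u => tau u - c * u) (fun u => k u - c) x y hxy) as [z [Hz1 Hz2]].
    { intros z _. apply is_derive_Reals.
      apply (is_derive_minus tau (fun u => c * u)). apply Hd.
      auto_derive; [auto | ring]. }
    assert (0 <= (k z - c) * (y - x)) by (apply Rmult_le_pos; [specialize (Hk z)|]; lra).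
    lra. }
  split; intro h.
  - destruct (Req_dec s 0) as [->|h']. rewrite H0; lra.
    specialize (Hg 0 s ltac:(lra)). lra.
  - destruct (Req_dec s 0) as [->|h']. rewrite H0; lra.
    specialize (Hg s 0 ltac:(lra)). lra.
Qed.

Lemma global_flow (k : R -> R) (c : R) :
  0 < c -> (forall s, continuous k s) -> (forall s, c <= k s) ->
  exists tau psi : R -> R, tau 0 = 0 /\ (forall s, is_derive tau s (k s)) /\
    (forall x y, x < y -> tau x < tau y) /\
    (forall t, tau (psi t) = t) /\ (forall s, psi (tau s) = s) /\ psi 0 = 0 /\
    (forall t, is_derive psi t (/ k (psi t))).
Proof.
  intros hc Hk Hkc.
  set (tau := fun u => RInt k 0 u).
  assert (Hd : forall s, is_derive tau s (k s)) by (apply prim_deriv; auto).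
  assert (H0 : tau 0 = 0) by (unfold tau; rewrite RInt_point; reflexivity).
  assert (Hpos : forall s, 0 < k s) by (intro s; specialize (Hkc s); lra).
  assert (Hinc : forall x y, x < y -> tau x < tau y).
  { intros x y h. apply (incr_of_deriv tau k (x - 1) (y + 1)); auto; try lra. }
  assert (Hsurj : forall t, exists s, tau s = t).
  { intro t.
    set (b := Rabs t / c + 1). set (a := - b).
    assert (hb : 0 < b) by (unfold b; assert (0 <= Rabs t / c) by (apply Rdiv_le_0_compat; [apply Rabs_pos|lra]); lra).
    assert (Ecb : c * b = Rabs t + c) by (unfold b; field; lra).
    destruct (lower_lin tau k c Hd Hkc H0 b) as [Hb _].
    destruct (lower_lin tau k c Hd Hkc H0 a) as [_ Ha].
    specialize (Hb ltac:(lra)). specialize (Ha ltac:(unfold a; lra)).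
    assert (Rabs t >= t /\ Rabs t >= - t) by (split; [apply Rle_ge, RRle_abs| apply Rle_ge; rewrite <- Rabs_Ropp; apply RRle_abs]).
    destruct (IVT (fun u => tau u - t) a b) as [z [hz1 hz2]].
    - intro u. apply continuity_pt_minus. apply derivable_continuous_pt.
      exists (k u). apply is_derive_Reals, Hd. apply continuity_pt_const. intros ? ?; auto.
    - unfold a; lra.
    - unfold a in *; lra.
    - lra.
    - exists z. lra. }
  set (psi := fun t => epsilon (inhabits 0) (fun s => tau s = t)).
  assert (Hp1 : forall t, tau (psi t) = t).
  { intro t. unfold psi. apply epsilon_spec. apply Hsurj. }
  assert (Hinj : forall x y, tau x = tau y -> x = y).
  { intros x y e. destruct (Rtotal_order x y) as [h|[h|h]]; auto.
    - specialize (Hinc x y h). lra.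
    - specialize (Hinc y x h). lra. }
  assert (Hp2 : forall s, psi (tau s) = s) by (intro s; apply Hinj; apply Hp1).
  assert (Hpsi0 : psi 0 = 0).
  { transitivity (psi (tau 0)); [now rewrite H0 | apply Hp2]. }
  exists tau, psi. do 6 (split; [auto|]).
  intro t. apply (inv_deriv tau k psi (psi t - 1) (psi t + 1) t).
  + lra.
  + exact Hd.
  + intros x y h1 h2 h3. apply Hinc; auto.
  + intros s hs. split; [|apply Hp1].
    split.
    * destruct (Rle_lt_dec (psi t - 1) (psi s)) as [h|h]; auto.
      apply Hinc in h. rewrite Hp1 in h. lra.
    * destruct (Rle_lt_dec (psi s) (psi t + 1)) as [h|h]; auto.
      apply Hinc in h. rewrite Hp1 in h. lra.
  + assert (h1 := Hinc (psi t - 1) (psi t) ltac:(lra)).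
    assert (h2 := Hinc (psi t) (psi t + 1) ltac:(lra)).
    rewrite Hp1 in h1, h2. lra.
  + specialize (Hpos (psi t)); lra.
Qed.

Lemma shift_flow (k tau psi : R -> R) (p : R) :
  (forall s, is_derive tau s (k s)) -> (forall s, k (s + p) = k s) -> tau 0 = 0 ->
  (forall t, tau (psi t) = t) -> (forall s, psi (tau s) = s) ->
  forall t, psi (t + tau p) = psi t + p.
Proof.
  intros Hd Hp H0 H1 H2.
  assert (Hg : forall x y, x < y -> tau (y + p) - tau y = tau (x + p) - tau x).
  { intros x y hxy.
    destruct (MVT_cor2 (fun u => tau (u + p) - tau u) (fun u => k (u + p) - k u) x y hxy) as [z [Hz1 Hz2]].
    { intros z _. apply is_derive_Reals.
      apply (is_derive_minus (fun u => tau (u + p)) tau).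
      - replace (k (z + p)) with (scal 1 (k (z + p))) by (apply Rmult_1_l).
        apply (is_derive_comp tau (fun u => u + p)). apply Hd.
        auto_derive; [auto | ring].
      - apply Hd. }
    rewrite Hp in Hz1. lra. }
  assert (Hc : forall s, tau (s + p) = tau s + tau p).
  { intro s. destruct (Rtotal_order s 0) as [h|[h|h]].
    - specialize (Hg s 0 h). rewrite H0, Rplus_0_l in Hg. lra.
    - subst. rewrite H0, Rplus_0_l. lra.
    - specialize (Hg 0 s h). rewrite H0, Rplus_0_l in Hg. lra. }
  intro t. rewrite <- (H1 t) at 1. rewrite <- Hc. apply H2.
Qed.

Lemma local_flow (k : R -> R) (a b : R) :
  a < 0 < b -> (forall s, continuous k s) -> (forall s, a < s < b -> 0 < k s) ->
  exists tau psi : R -> R, tau 0 = 0 /\ (forall s, is_derive tau s (k s)) /\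
    (forall x y, a <= x -> x < y -> y <= b -> tau x < tau y) /\
    (forall t, tau a <= t <= tau b -> a <= psi t <= b /\ tau (psi t) = t) /\
    psi 0 = 0 /\
    (forall t, tau a < t < tau b -> a < psi t < b /\ is_derive psi t (/ k (psi t))).
Proof.
  intros hab Hk Hkp.
  set (tau := fun u => RInt k 0 u).
  assert (Hd : forall s, is_derive tau s (k s)) by (apply prim_deriv; auto).
  assert (H0 : tau 0 = 0) by (unfold tau; rewrite RInt_point; reflexivity).
  assert (Hinc := incr_of_deriv tau k a b Hd Hkp).
  assert (Hsurj : forall t, tau a <= t <= tau b -> exists s, a <= s <= b /\ tau s = t).
  { intros t ht.
    destruct (IVT_cor (fun u => tau u - t) a b) as [z [hz1 hz2]].
    - intro u. apply continuity_pt_minus. apply derivable_continuous_pt.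
      exists (k u). apply is_derive_Reals, Hd. apply continuity_pt_const. intros ? ?; auto.
    - lra.
    - assert (0 <= (t - tau a) * (tau b - t)) by (apply Rmult_le_pos; lra). nra.
    - exists z. split; auto. lra. }
  set (psi := fun t => epsilon (inhabits 0) (fun s => a <= s <= b /\ tau s = t)).
  assert (Hp1 : forall t, tau a <= t <= tau b -> a <= psi t <= b /\ tau (psi t) = t).
  { intros t ht. unfold psi. apply epsilon_spec. apply Hsurj; auto. }
  assert (Hinj : forall x y, a <= x <= b -> a <= y <= b -> tau x = tau y -> x = y).
  { intros x y hx hy e. destruct (Rtotal_order x y) as [h|[h|h]]; auto.
    - specialize (Hinc x y ltac:(lra) h ltac:(lra)). lra.
    - specialize (Hinc y x ltac:(lra) h ltac:(lra)). lra. }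
  assert (Ha0 : tau a < 0) by (rewrite <- H0; apply Hinc; lra).
  assert (Hb0 : 0 < tau b) by (rewrite <- H0; apply Hinc; lra).
  assert (Hpsi0 : psi 0 = 0).
  { destruct (Hp1 0 ltac:(lra)) as [h1 h2]. apply Hinj; auto; lra. }
  exists tau, psi. do 5 (split; [auto|]).
  intros t ht. destruct (Hp1 t ltac:(lra)) as [h1 h2].
  assert (hin : a < psi t < b).
  { split.
    - destruct h1 as [h1 _]. destruct h1 as [h1|h1]; auto. rewrite <- h1 in h2. lra.
    - destruct h1 as [_ h1]. destruct h1 as [h1|h1]; auto. rewrite h1 in h2. lra. }
  split; auto.
  apply (inv_deriv tau k psi a b t).
  + lra.
  + exact Hd.
  + exact Hinc.
  + exact Hp1.
  + exact ht.
  + specialize (Hkp (psi t) hin). lra.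
Qed.

Definition fhat (al be y : R) : R := - y + al * y ^ 2 + be / (2 * (1 - y) ^ 2).

Lemma fhat_alt al be y : y <> 1 ->
  fhat al be y = (be - hh al y - y * (1 - y) * hd al y) / (2 * (1 - y) ^ 2).
Proof. intro h. unfold fhat, hh, hd. field. contradict h. lra. Qed.

Lemma bridge (m E D Ac A L d eps0 V al be w x a Y : R) :
  0 < m -> 0 < E -> 0 < Ac -> 0 < L -> 0 < d ->
  al = D * d / (E * L) -> be = eps0 * A * V ^ 2 * L / (E * Ac * d ^ 3) ->
  w ^ 2 = E * Ac / (m * L) -> 0 <= Y < 1 -> x = d * Y ->
  a = d * w ^ 2 * fhat al be Y ->
  m * a + E * Ac * (x / L) - D * Ac * Rabs (x / L) * (x / L)
    = eps0 * A * V ^ 2 / (2 * (d - x) ^ 2).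
Proof.
  intros hm hE hAc hL hd hal hbe hw hY hx ha.
  rewrite Rabs_pos_eq by (rewrite hx; apply Rdiv_le_0_compat; nra).
  subst a x al be. rewrite hw. unfold fhat. field.
  repeat split; try lra. intro h. assert (d * (1 - Y) = 0) by lra.
  apply Rmult_integral in H. lra.
Qed.

Lemma assemble (m E D Ac A L d eps0 V al be w : R) (Y Y1 G G1 k psi : R -> R) (t : R) :
  0 < m -> 0 < E -> 0 < Ac -> 0 < L -> 0 < d ->
  al = D * d / (E * L) -> be = eps0 * A * V ^ 2 * L / (E * Ac * d ^ 3) ->
  w ^ 2 = E * Ac / (m * L) ->
  is_derive psi t (/ k (psi t)) -> is_derive Y (psi t) (Y1 (psi t)) ->
  is_derive G (psi t) (G1 (psi t)) ->
  G (psi t) = d * Y1 (psi t) / k (psi t) ->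
  G1 (psi t) / k (psi t) = d * w ^ 2 * fhat al be (Y (psi t)) ->
  0 <= Y (psi t) < 1 ->
  ode_at m E D Ac A L d eps0 V (fun t => d * Y (psi t)) (fun t => G (psi t))
    (fun t => G1 (psi t) / k (psi t)) t.
Proof.
  intros hm hE hAc hL hd hal hbe hw Hpsi HY HG E1 E2 HYb.
  unfold ode_at. split; [|split; [|split]].
  - assert (d * Y (psi t) < d * 1) by (apply Rmult_lt_compat_l; lra). lra.
  - auto_derive.
    + split. exists (Y1 (psi t)); auto. split; auto. exists (/ k (psi t)); auto.
    + replace (Derive (fun x => psi x) t) with (/ k (psi t)) by (symmetry; apply is_derive_unique; auto).
      replace (Derive (fun x => Y x) (psi t)) with (Y1 (psi t)) by (symmetry; apply is_derive_unique; auto).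
      rewrite E1. unfold Rdiv. ring.
  - auto_derive.
    + split. exists (G1 (psi t)); auto. split; auto. exists (/ k (psi t)); auto.
    + replace (Derive (fun x => psi x) t) with (/ k (psi t)) by (symmetry; apply is_derive_unique; auto).
      replace (Derive (fun x => G x) (psi t)) with (G1 (psi t)) by (symmetry; apply is_derive_unique; auto).
      unfold Rdiv. ring.
  - eapply bridge; eauto.
Qed.

Section CaseP.
Variables al y1 w d : R.
Hypothesis hal : 0 < al.
Hypothesis hy1 : 0 < y1.
Hypothesis hy1s : y1 < ys al.
Hypothesis hw : 0 < w.

Definition rP y := 2*al/3*(y^2 + y*y1 + y1^2) - (1+2*al/3)*(y+y1) + 1.
Definition QP y := rP y / (1 - y).
Definition QPd y := ((2*al/3*(2*y+y1) - (1+2*al/3))*(1-y) + rP y)/(1-y)^2.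
Definition YP th := y1*(1 - cos th)/2.
Definition Y1P th := y1 * sin th / 2.
Definition qP th := QP (YP th).
Definition kP th := / (w * sqrt (qP th)).
Definition GP th := d*y1*w*sin th * sqrt (qP th)/2.
Definition GP1 th := d*y1*w/2*(cos th * sqrt (qP th) + sin th * (QPd (YP th) * (y1 * sin th / 2)) / (2 * sqrt (qP th))).

Lemma y1_lt1 : y1 < 1.
Proof. assert (h := ys_lt1 al hal). lra. Qed.

Lemma YP_bound th : 0 <= YP th <= y1.
Proof. unfold YP. assert (h := COS_bound th). split; nra. Qed.

Lemma rP_simpson y : rP y = (hd al y + 4 * hd al ((y + y1) / 2) + hd al y1) / 6.
Proof. unfold rP, hd. field. Qed.

Lemma rP_pos y : 0 <= y <= y1 -> 0 < rP y.
Proof.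
  intro hy. rewrite rP_simpson.
  assert (0 < hd al y) by (apply hd_pos; lra).
  assert (0 < hd al ((y + y1) / 2)) by (apply hd_pos; lra).
  assert (0 < hd al y1) by (apply hd_pos; lra).
  lra.
Qed.

Lemma rP_le y : 0 <= y <= y1 -> rP y <= 2 * al + 1.
Proof. intro hy. assert (h := y1_lt1). unfold rP.
  assert (h2 : y^2 + y*y1 + y1^2 <= 3) by nra.
  assert (h3 : 2*al/3*(y^2 + y*y1 + y1^2) <= 2*al/3*3) by (apply Rmult_le_compat_l; lra).
  assert (h4 : 0 <= (1+2*al/3)*(y+y1)) by (apply Rmult_le_pos; lra).
  lra. Qed.

Lemma qP_pos th : 0 < qP th.
Proof. unfold qP, QP. assert (h := YP_bound th). assert (h' := y1_lt1).
  apply Rdiv_lt_0_compat. apply rP_pos; lra. lra. Qed.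

Lemma qP_le th : qP th <= (2 * al + 1) / (1 - y1).
Proof. unfold qP, QP. assert (h := YP_bound th). assert (h' := y1_lt1).
  assert (h2 := rP_le (YP th) h). assert (h3 := rP_pos (YP th) h).
  unfold Rdiv. apply Rmult_le_compat; try lra.
  apply Rlt_le, Rinv_0_lt_compat; lra.
  apply Rinv_le_contravar; lra. Qed.

Lemma qP_deriv th : is_derive qP th (QPd (YP th) * (y1 * sin th / 2)).
Proof.
  assert (h := YP_bound th). assert (h' := y1_lt1).
  unfold qP, QP, rP, YP. auto_derive.
  - unfold YP in h. lra.
  - unfold QPd, rP, YP. field. unfold YP in h. lra.
Qed.

Lemma YP_deriv th : is_derive YP th (Y1P th).
Proof. unfold YP, Y1P. auto_derive. auto. field. Qed.

Lemma GP_deriv th : is_derive GP th (GP1 th).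
Proof.
  assert (HF := qP_deriv th). assert (Hp := qP_pos th).
  unfold GP, GP1. auto_derive.
  - split. eexists; eauto. split; auto.
  - replace (Derive (fun x => qP x) th) with (QPd (YP th) * (y1 * sin th / 2))
      by (symmetry; apply is_derive_unique; auto).
    field. apply Rgt_not_eq, sqrt_lt_R0; auto.
Qed.

Lemma kP_cont th : continuous kP th.
Proof.
  apply (@ex_derive_continuous R_AbsRing R_NormedModule).
  assert (HF := qP_deriv th). assert (Hp := qP_pos th).
  unfold kP. auto_derive.
  split. eexists; eauto. split; auto. split; auto.
  apply Rmult_integral_contrapositive; split; [lra|apply Rgt_not_eq, sqrt_lt_R0; auto].
Qed.

Definition cP := / (w * sqrt ((2 * al + 1) / (1 - y1))).

Lemma cP_pos : 0 < cP.
Proof. unfold cP. assert (h' := y1_lt1). apply Rinv_0_lt_compat, Rmult_lt_0_compat; auto.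
  apply sqrt_lt_R0. apply Rdiv_lt_0_compat; lra. Qed.

Lemma kP_ge th : cP <= kP th.
Proof.
  unfold cP, kP. assert (Hp := qP_pos th). assert (h := qP_le th).
  apply Rinv_le_contravar.
  apply Rmult_lt_0_compat; auto. apply sqrt_lt_R0; auto.
  apply Rmult_le_compat_l. lra. apply sqrt_le_1; lra.
Qed.

Lemma kP_per th : kP (th + 2 * PI) = kP th.
Proof. unfold kP, qP, YP. replace (cos (th + 2 * PI)) with (cos th). reflexivity.
  rewrite cos_plus, cos_2PI, sin_2PI. ring. Qed.

Lemma YP_per th : YP (th + 2 * PI) = YP th.
Proof. unfold YP. rewrite cos_plus, cos_2PI, sin_2PI. f_equal. ring. Qed.

Lemma alg_P C : y1 * (1 - C) / 2 <> 1 ->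
  y1 / 2 * (C * QP (y1 * (1 - C) / 2) + (1 - C ^ 2) * QPd (y1 * (1 - C) / 2) * y1 / 4)
  = fhat al (hh al y1) (y1 * (1 - C) / 2).
Proof. intro h. unfold QP, QPd, rP, fhat, hh. field. contradict h; lra. Qed.

Lemma GP_id th : GP th = d * Y1P th / kP th.
Proof. unfold GP, Y1P, kP, Rdiv. rewrite Rinv_inv. field. Qed.

Lemma GP1_id th : GP1 th / kP th = d * w ^ 2 * fhat al (hh al y1) (YP th).
Proof.
  assert (Hp := qP_pos th). assert (hq := sqrt_sqrt (qP th) (Rlt_le _ _ Hp)).
  assert (hs : sqrt (qP th) <> 0) by (apply Rgt_not_eq, sqrt_lt_R0; auto).
  assert (h := YP_bound th). assert (h' := y1_lt1).
  transitivity (d * w ^ 2 * (y1 / 2 * (cos th * QP (YP th) + (1 - cos th ^ 2) * QPd (YP th) * y1 / 4))).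
  2:{ unfold YP. rewrite alg_P. reflexivity. unfold YP in h. lra. }
  unfold GP1, kP. unfold Rdiv at 1. rewrite Rinv_inv.
  replace (1 - cos th ^ 2) with (sin th ^ 2) by (rewrite <- (sin2_cos2 th); unfold Rsqr; ring).
  unfold qP in *.
  set (q := sqrt (QP (YP th))) in *.
  replace (QP (YP th)) with (q * q) by auto.
  field. auto.
Qed.

End CaseP.

Definition tnh u := (exp u - exp (- u)) / (exp u + exp (- u)).

Lemma tnh_deriv u : is_derive tnh u (1 - tnh u ^ 2).
Proof.
  assert (h1 := exp_pos u). assert (h2 := exp_pos (-u)).
  unfold tnh. auto_derive. lra. field. lra.
Qed.

Lemma tnh_sq u : 0 < 1 - tnh u ^ 2.
Proof.
  assert (h1 := exp_pos u). assert (h2 := exp_pos (-u)).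
  replace (1 - tnh u ^ 2) with (4 * exp u * exp (-u) / (exp u + exp (-u)) ^ 2)
    by (unfold tnh; field; lra).
  apply Rdiv_lt_0_compat. nra. apply pow_lt; lra.
Qed.

Lemma tnh_0 : tnh 0 = 0.
Proof. unfold tnh. rewrite Ropp_0, exp_0. field_simplify; lra. Qed.

Section CaseG.
Variables al w d : R.
Hypothesis hal : 0 < al.
Hypothesis hw : 0 < w.

Let s := ys al.
Let t3 := y3 al.

Definition QG y := 2*al/3*s*(t3 - y)/(1 - y).
Definition QGd y := 2*al/3*s*(t3 - 1)/(1 - y)^2.
Definition YG u := s * tnh u ^ 2.
Definition Y1G u := 2 * s * tnh u * (1 - tnh u ^ 2).
Definition qG u := QG (YG u).
Definition kG u := 2 / (w * sqrt (qG u)).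
Definition GG u := d * s * w * tnh u * (1 - tnh u ^ 2) * sqrt (qG u).
Definition GG1 u := d * s * w * ((1 - tnh u ^ 2) * (1 - 3 * tnh u ^ 2) * sqrt (qG u)
   + tnh u * (1 - tnh u ^ 2) * (QGd (YG u) * Y1G u) / (2 * sqrt (qG u))).

Lemma s_facts : 0 < s < 1 /\ 1 < t3.
Proof. unfold s, t3. split. split. apply ys_pos; auto. apply ys_lt1; auto. apply y3_gt1; auto. Qed.

Lemma YG_bound u : 0 <= YG u < s.
Proof. unfold YG. assert (h := tnh_sq u). destruct s_facts as [[h1 h2] h3].
  assert (0 <= tnh u ^ 2) by apply pow2_ge_0. split; nra. Qed.

Lemma YG_deriv u : is_derive YG u (Y1G u).
Proof.
  assert (H := tnh_deriv u). unfold YG, Y1G. auto_derive.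
  - eexists; eauto.
  - replace (Derive (fun x => tnh x) u) with (1 - tnh u ^ 2) by (symmetry; apply is_derive_unique; auto).
    ring.
Qed.

Lemma qG_pos u : 0 < qG u.
Proof. unfold qG, QG. assert (h := YG_bound u). destruct s_facts as [[h1 h2] h3].
  apply Rdiv_lt_0_compat; [|lra]. apply Rmult_lt_0_compat; [|lra].
  apply Rmult_lt_0_compat; lra. Qed.

Lemma qG_le u : qG u <= 2*al/3*s*t3/(1 - s).
Proof. unfold qG, QG. assert (h := YG_bound u). destruct s_facts as [[h1 h2] h3].
  assert (0 < 2*al/3*s) by (apply Rmult_lt_0_compat; lra).
  replace (2*al/3*s*(t3 - YG u)/(1 - YG u)) with ((2*al/3*s) * ((t3 - YG u) * / (1 - YG u))) by (field; lra).
  replace (2*al/3*s*t3/(1 - s)) with ((2*al/3*s) * (t3 * / (1 - s))) by (field; lra).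
  apply Rmult_le_compat_l. lra.
  apply Rmult_le_compat. lra. apply Rlt_le, Rinv_0_lt_compat. lra. lra.
  apply Rinv_le_contravar; lra. Qed.

Lemma qG_deriv u : is_derive qG u (QGd (YG u) * Y1G u).
Proof.
  assert (H := YG_deriv u). assert (h := YG_bound u). destruct s_facts as [[h1 h2] h3].
  unfold qG, QG. auto_derive.
  - repeat match goal with |- _ /\ _ => split | |- True => exact I | |- ex_derive _ _ => eexists; eassumption end; lra.
  - replace (Derive (fun x => YG x) u) with (Y1G u) by (symmetry; apply is_derive_unique; auto).
    unfold QGd. field. lra.
Qed.

Lemma GG_deriv u : is_derive GG u (GG1 u).
Proof.
  assert (HF := qG_deriv u). assert (Hp := qG_pos u). assert (HT := tnh_deriv u).
  unfold GG, GG1. auto_derive.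
  - split. eexists; eauto. split. eexists; eauto. split. eexists; eauto. split; auto.
  - replace (Derive (fun x => qG x) u) with (QGd (YG u) * Y1G u)
      by (symmetry; apply is_derive_unique; auto).
    replace (Derive (fun x => tnh x) u) with (1 - tnh u ^ 2)
      by (symmetry; apply is_derive_unique; auto).
    field. apply Rgt_not_eq, sqrt_lt_R0; auto.
Qed.

Lemma kG_cont u : continuous kG u.
Proof.
  apply (@ex_derive_continuous R_AbsRing R_NormedModule).
  assert (HF := qG_deriv u). assert (Hp := qG_pos u).
  unfold kG. auto_derive.
  split. eexists; eauto. split; auto. split; auto.
  apply Rmult_integral_contrapositive; split; [lra|apply Rgt_not_eq, sqrt_lt_R0; auto].
Qed.

Definition cG := 2 / (w * sqrt (2*al/3*s*t3/(1 - s))).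

Lemma cG_pos : 0 < cG.
Proof. unfold cG. destruct s_facts as [[h1 h2] h3].
  apply Rdiv_lt_0_compat. lra. apply Rmult_lt_0_compat; auto.
  apply sqrt_lt_R0. apply Rdiv_lt_0_compat; [|lra].
  apply Rmult_lt_0_compat; [|lra]. apply Rmult_lt_0_compat; lra. Qed.

Lemma kG_ge u : cG <= kG u.
Proof.
  unfold cG, kG. assert (Hp := qG_pos u). assert (h := qG_le u).
  unfold Rdiv. apply Rmult_le_compat_l. lra.
  apply Rinv_le_contravar.
  apply Rmult_lt_0_compat; auto. apply sqrt_lt_R0; auto.
  apply Rmult_le_compat_l. lra. apply sqrt_le_1; lra.
Qed.

Lemma GG_id u : GG u = d * Y1G u / kG u.
Proof. unfold GG, Y1G, kG. assert (Hp := qG_pos u).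
  assert (hs : sqrt (qG u) <> 0) by (apply Rgt_not_eq, sqrt_lt_R0; auto).
  field. split; auto. lra. Qed.

Lemma alg_G T : s * T ^ 2 <> 1 ->
  s / 2 * (1 - T ^ 2) * ((1 - 3 * T ^ 2) * QG (s * T ^ 2) + s * T ^ 2 * (1 - T ^ 2) * QGd (s * T ^ 2))
  = (2*al/3*(s - s*T^2)^2*(t3 - s*T^2) - s*T^2*(1 - s*T^2)*(2*al*(s*T^2 - s)*(s*T^2 - (2*t3+s)/3)))
    / (2 * (1 - s*T^2)^2).
Proof. intro h. unfold QG, QGd. field. contradict h. lra. Qed.

Lemma fhat_G Y : Y <> 1 ->
  fhat al (hh al s) Y = (2*al/3*(s - Y)^2*(t3 - Y) - Y*(1 - Y)*(2*al*(Y - s)*(Y - (2*t3+s)/3)))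
    / (2 * (1 - Y)^2).
Proof.
  intro h. rewrite fhat_alt by auto. unfold s, t3. rewrite hh_fact by auto.
  rewrite hd_fact by auto.
  replace (yss al) with ((2 * y3 al + ys al) / 3). reflexivity.
  unfold yss, y3, ys. field. lra.
Qed.

Lemma GG1_id u : GG1 u / kG u = d * w ^ 2 * fhat al (hh al s) (YG u).
Proof.
  assert (Hp := qG_pos u). assert (hq := sqrt_sqrt (qG u) (Rlt_le _ _ Hp)).
  assert (hs : sqrt (qG u) <> 0) by (apply Rgt_not_eq, sqrt_lt_R0; auto).
  assert (h := YG_bound u). destruct s_facts as [[h1 h2] h3].
  rewrite fhat_G by lra. unfold YG in *. rewrite <- alg_G by lra.
  unfold GG1, kG, Y1G, YG. unfold qG in *. unfold YG in *.
  set (q := sqrt (QG (s * tnh u ^ 2))) in *.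
  replace (QG (s * tnh u ^ 2)) with (q * q) by auto.
  field. split; auto. lra.
Qed.

End CaseG.

Ltac sidec := repeat match goal with |- _ /\ _ => split | |- True => exact I | |- ex_derive _ _ => eexists; eassumption end.

Section CaseI.
Variables al be w d : R.
Hypothesis hal : 0 < al.
Hypothesis hw : 0 < w.
Hypothesis hbe : hh al (ys al) < be.

Definition YI p := sin p ^ 2.
Definition Y1I p := 2 * sin p * cos p.
Definition bI p := be - hh al (YI p).
Definition kI p := 2 * cos p ^ 2 / (w * sqrt (bI p)).
Definition GI p := d * w * sin p * sqrt (bI p) / cos p.
Definition GI1 p := d * w * (sqrt (bI p) - sin p ^ 2 * hd al (YI p) / sqrt (bI p)
   + sin p ^ 2 * sqrt (bI p) / cos p ^ 2).

Lemma YI_bound p : 0 <= YI p <= 1.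
Proof. unfold YI. assert (h := SIN_bound p). split. apply pow2_ge_0. nra. Qed.

Lemma bI_pos p : 0 < bI p.
Proof. unfold bI. assert (h := hh_le al hal (YI p) (YI_bound p)). lra. Qed.

Lemma YI_deriv p : is_derive YI p (Y1I p).
Proof. unfold YI, Y1I. auto_derive. auto. ring. Qed.

Lemma bI_deriv p : is_derive bI p (- hd al (YI p) * Y1I p).
Proof. unfold bI, hh, YI. auto_derive. auto. unfold hd, Y1I, YI. field. Qed.

Lemma GI_deriv p : cos p <> 0 -> is_derive GI p (GI1 p).
Proof.
  intro hc.
  assert (HF := bI_deriv p). assert (Hp := bI_pos p).
  assert (hs : sqrt (bI p) <> 0) by (apply Rgt_not_eq, sqrt_lt_R0; auto).
  unfold GI, GI1. auto_derive.
  - sidec; auto.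
  - replace (Derive (fun x => bI x) p) with (- hd al (YI p) * Y1I p)
      by (symmetry; apply is_derive_unique; auto).
    unfold Y1I. field. auto.
Qed.

Lemma kI_cont p : continuous kI p.
Proof.
  apply (@ex_derive_continuous R_AbsRing R_NormedModule).
  assert (HF := bI_deriv p). assert (Hp := bI_pos p).
  unfold kI. auto_derive. sidec; auto.
  apply Rmult_integral_contrapositive; split; [lra|apply Rgt_not_eq, sqrt_lt_R0; auto].
Qed.

Lemma kI_pos p : - PI / 2 < p < PI / 2 -> 0 < kI p.
Proof. intro h. unfold kI. assert (hc := cos_gt_0 p ltac:(lra) ltac:(lra)).
  apply Rdiv_lt_0_compat. nra. apply Rmult_lt_0_compat; auto. apply sqrt_lt_R0, bI_pos. Qed.

Lemma GI_id p : cos p <> 0 -> GI p = d * Y1I p / kI p.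
Proof. intro hc. unfold GI, Y1I, kI. assert (Hp := bI_pos p).
  assert (hs : sqrt (bI p) <> 0) by (apply Rgt_not_eq, sqrt_lt_R0; auto).
  field. split; auto. lra. Qed.

Lemma GI1_id p : cos p <> 0 -> GI1 p / kI p = d * w ^ 2 * fhat al be (YI p).
Proof.
  intro hc. assert (Hp := bI_pos p). assert (hq := sqrt_sqrt (bI p) (Rlt_le _ _ Hp)).
  assert (hs : sqrt (bI p) <> 0) by (apply Rgt_not_eq, sqrt_lt_R0; auto).
  assert (hc2 : cos p ^ 2 = 1 - YI p) by (unfold YI; rewrite <- (sin2_cos2 p); unfold Rsqr; ring).
  assert (hY : YI p <> 1) by (intro h; rewrite h in hc2; apply hc; nra).
  rewrite fhat_alt by auto.
  unfold GI1, kI. replace (sin p ^ 2) with (YI p) by reflexivity.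
  replace (be - hh al (YI p)) with (bI p) by reflexivity.
  set (q := sqrt (bI p)) in *.
  replace (bI p) with (q * q) by auto.
  rewrite hc2. field. repeat split; auto; lra.
Qed.

End CaseI.

Lemma hh_cont al : continuity (fun y => hh al y).
Proof. intro y. apply derivable_continuous_pt.
  exists (hd al y). apply is_derive_Reals. unfold hh, hd. auto_derive. auto. field. Qed.

Lemma case_P (m E D Ac A L d eps0 V al be w : R) :
  0 < m -> 0 < E -> 0 < Ac -> 0 < L -> 0 < d ->
  al = D * d / (E * L) -> be = eps0 * A * V ^ 2 * L / (E * Ac * d ^ 3) ->
  w ^ 2 = E * Ac / (m * L) -> 0 < w -> 0 < al -> 0 < be -> be < hh al (ys al) ->
  exists x, periodic_solution m E D Ac A L d eps0 V x.
Proof.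
  intros hm hE hAc hL hd Hal Hbe Hw hw hal hbe0 hbe1.
  destruct (IVT (fun y => hh al y - be) 0 (ys al)) as [y1 [hy1 Hy1]].
  - intro y. apply continuity_pt_minus. apply hh_cont. apply continuity_pt_const. intros ? ?; auto.
  - apply ys_pos; auto.
  - unfold hh. lra.
  - lra.
  - assert (Ey1 : be = hh al y1) by lra.
    assert (hy1a : 0 < y1).
    { destruct hy1 as [[h|h] _]; auto. subst y1. unfold hh in Ey1. lra. }
    assert (hy1b : y1 < ys al).
    { destruct hy1 as [_ [h|h]]; auto. subst y1. lra. }
    destruct (global_flow (kP al y1 w) (cP al y1 w)) as [tau [psi [H0 [Hd [Hinc [H1 [H2 [Hp0 Hpd]]]]]]]].
    + apply cP_pos; auto.
    + intro s. apply kP_cont; auto.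
    + intro s. apply kP_ge; auto.
    + exists (fun t => d * YP y1 (psi t)). split.
      * split.
        -- rewrite Hp0. unfold YP. rewrite cos_0. field.
        -- exists (fun t => GP al y1 w d (psi t)), (fun t => GP1 al y1 w d (psi t) / kP al y1 w (psi t)).
           split.
           ++ rewrite Hp0. unfold GP. rewrite sin_0. field.
           ++ intros t _ _.
              apply (assemble m E D Ac A L d eps0 V al be w (YP y1) (Y1P y1)); auto.
              ** apply YP_deriv.
              ** apply GP_deriv; auto.
              ** apply GP_id.
              ** rewrite Ey1. apply GP1_id; auto.
              ** assert (h := YP_bound y1 hy1a (psi t)). assert (h' := ys_lt1 al hal). lra.
      * exists (tau (2 * PI)). split.
        -- rewrite <- H0. apply Hinc. assert (h := PI_RGT_0). lra.
        -- intro t. rewrite (shift_flow (kP al y1 w) tau psi (2 * PI)); auto.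
           rewrite YP_per. reflexivity.
           intro s. apply kP_per.
Qed.

Lemma case_G (m E D Ac A L d eps0 V al be w : R) :
  0 < m -> 0 < E -> 0 < Ac -> 0 < L -> 0 < d ->
  al = D * d / (E * L) -> be = eps0 * A * V ^ 2 * L / (E * Ac * d ^ 3) ->
  w ^ 2 = E * Ac / (m * L) -> 0 < w -> 0 < al -> be = hh al (ys al) ->
  exists x, global_solution m E D Ac A L d eps0 V x.
Proof.
  intros hm hE hAc hL hd Hal Hbe Hw hw hal hbe.
  destruct (global_flow (kG al w) (cG al w)) as [tau [psi [H0 [Hd [Hinc [H1 [H2 [Hp0 Hpd]]]]]]]].
  + apply cG_pos; auto.
  + intro s. apply kG_cont; auto.
  + intro s. apply kG_ge; auto.
  + exists (fun t => d * YG al (psi t)). split.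
    -- rewrite Hp0. unfold YG. rewrite tnh_0. field.
    -- exists (fun t => GG al w d (psi t)), (fun t => GG1 al w d (psi t) / kG al w (psi t)).
       split.
       ++ rewrite Hp0. unfold GG. rewrite tnh_0. field.
       ++ intros t _ _.
          apply (assemble m E D Ac A L d eps0 V al be w (YG al) (Y1G al)); auto.
          ** apply YG_deriv.
          ** apply GG_deriv; auto.
          ** apply GG_id; auto.
          ** rewrite hbe. apply GG1_id; auto.
          ** assert (h := YG_bound al hal (psi t)). assert (h' := ys_lt1 al hal). lra.
Qed.

Lemma case_I (m E D Ac A L d eps0 V al be w : R) :
  0 < m -> 0 < E -> 0 < Ac -> 0 < L -> 0 < d ->
  al = D * d / (E * L) -> be = eps0 * A * V ^ 2 * L / (E * Ac * d ^ 3) ->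
  w ^ 2 = E * Ac / (m * L) -> 0 < w -> 0 < al -> hh al (ys al) < be ->
  pull_in m E D Ac A L d eps0 V.
Proof.
  intros hm hE hAc hL hd Hal Hbe Hw hw hal hbe.
  assert (hPI := PI_RGT_0).
  destruct (local_flow (kI al be w) (- PI / 2) (PI / 2)) as [tau [psi [H0 [Hd [Hinc [H1 [Hp0 Hpd]]]]]]].
  - lra.
  - intro s. apply kI_cont; auto.
  - intros s hs. apply kI_pos; auto.
  - assert (hlo : tau (- PI / 2) < 0) by (rewrite <- H0; apply Hinc; lra).
    assert (hT : 0 < tau (PI / 2)) by (rewrite <- H0; apply Hinc; lra).
    exists (tau (- PI / 2)), (tau (PI / 2)), (fun t => d * YI (psi t)).
    split; [lra|split].
    + split.
      * rewrite Hp0. unfold YI. rewrite sin_0. field.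
      * exists (fun t => GI al be w d (psi t)), (fun t => GI1 al be w d (psi t) / kI al be w (psi t)).
        split.
        -- rewrite Hp0. unfold GI. rewrite sin_0, cos_0. field.
        -- intros t ht1 ht2. simpl in ht1, ht2.
           destruct (Hpd t (conj ht1 ht2)) as [hin hder].
           assert (hc : 0 < cos (psi t)) by (apply cos_gt_0; lra).
           apply (assemble m E D Ac A L d eps0 V al be w YI Y1I); auto.
           ** apply YI_deriv.
           ** apply GI_deriv; auto; lra.
           ** apply GI_id; auto; lra.
           ** apply GI1_id; auto; lra.
           ** assert (hc2 : cos (psi t) ^ 2 = 1 - YI (psi t)) by (unfold YI; rewrite <- (sin2_cos2 (psi t)); unfold Rsqr; ring).
              assert (0 < cos (psi t) ^ 2) by (apply pow_lt; auto).
              unfold YI in *. split. apply pow2_ge_0. lra.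
    +
      set (T := tau (PI / 2)).
      assert (Hpsi : filterlim psi (at_left T) (locally (PI / 2))).
      { intros P [eps HP].
        set (p0 := Rmax 0 (PI / 2 - eps / 2)).
        assert (hp0 : 0 <= p0 < PI / 2).
        { unfold p0. split. apply Rmax_l. apply Rmax_lub_lt; destruct eps as [e he]; simpl in *; lra. }
        assert (htp0 : tau p0 < T) by (apply Hinc; lra).
        assert (hdel : 0 < T - tau p0) by lra.
        exists (mkposreal _ hdel). intros t Ht htT. simpl in Ht.
        apply HP.
        assert (Ht' : Rabs (t - T) < T - tau p0) by exact Ht.
        apply Rabs_def2 in Ht'.
        assert (ht0 : tau p0 < t) by lra.
        assert (ht1 : tau (- PI / 2) < t) by (assert (tau (-PI/2) <= tau p0) by (left; apply Hinc; lra); lra).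
        destruct (Hpd t (conj ht1 htT)) as [hin _].
        assert (hrange : tau (- PI / 2) <= t <= T) by lra. destruct (H1 t hrange) as [_ ht].
        assert (hgt : p0 < psi t).
        { destruct (Rlt_le_dec p0 (psi t)) as [h|h]; auto.
          destruct h as [h|h].
          - assert (tau (psi t) < tau p0) by (apply Hinc; lra). lra.
          - rewrite h in ht. lra. }
        assert (hp0' : PI / 2 - eps / 2 <= p0) by apply Rmax_r.
        change (Rabs (psi t - PI / 2) < eps).
        rewrite Rabs_left by lra. destruct eps; simpl in *; lra. }
      assert (Hc : filterlim (fun p => d * YI p) (locally (PI / 2)) (locally d)).
      { assert (Hc0 : continuous (fun p => d * YI p) (PI / 2)).
        { apply (@ex_derive_continuous R_AbsRing R_NormedModule).
          unfold YI. auto_derive. auto. }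
        unfold continuous in Hc0.
        replace (d * YI (PI / 2)) with d in Hc0 by (unfold YI; rewrite sin_PI2; ring).
        exact Hc0. }
      exact (filterlim_comp _ _ _ psi (fun p => d * YI p) _ _ _ Hpsi Hc).
Qed.

Lemma zero_sol (m E D Ac A L d eps0 : R) :
  0 < L -> 0 < d -> periodic_solution m E D Ac A L d eps0 0 (fun _ => 0).
Proof.
  intros hL hd. split.
  - split; auto. exists (fun _ => 0), (fun _ => 0). split; auto.
    intros t _ _. unfold ode_at. split; [lra|split; [|split]].
    + auto_derive; auto.
    + auto_derive; auto.
    + replace (0 / L) with 0 by (field; lra). rewrite Rabs_R0. field. lra.
  - exists 1. split; [lra|auto].
Qed.

Theorem mainTheorem2 (m E D Ac A L d eps0 V : R)
  (hm : 0 < m) (hE : 0 < E) (hD : 0 < D) (hAc : 0 < Ac) (hA : 0 < A)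
  (hL : 0 < L) (hd : 0 < d) (heps0 : 0 < eps0) (hV : 0 <= V) :
  (V < V_pull_in m E D Ac A L d eps0 ->
     exists x : R -> R, periodic_solution m E D Ac A L d eps0 V x) /\
  (V <= V_pull_in m E D Ac A L d eps0 ->
     exists x : R -> R, global_solution m E D Ac A L d eps0 V x) /\
  (V_pull_in m E D Ac A L d eps0 < V -> pull_in m E D Ac A L d eps0 V).
Proof.
  set (al := alpha_par E D L d).
  assert (Hal : al = D * d / (E * L)) by reflexivity.
  assert (hal : 0 < al) by (rewrite Hal; apply Rdiv_lt_0_compat; apply Rmult_lt_0_compat; auto).
  set (be := eps0 * A * V ^ 2 * L / (E * Ac * d ^ 3)).
  assert (Hbe : be = eps0 * A * V ^ 2 * L / (E * Ac * d ^ 3)) by reflexivity.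
  set (w := sqrt (E * Ac / (m * L))).
  assert (hw2 : w ^ 2 = E * Ac / (m * L)).
  { unfold w. rewrite pow2_sqrt. reflexivity. apply Rlt_le, Rdiv_lt_0_compat; apply Rmult_lt_0_compat; auto. }
  assert (hw : 0 < w).
  { unfold w. apply sqrt_lt_R0, Rdiv_lt_0_compat; apply Rmult_lt_0_compat; auto. }
  set (bs := hh al (ys al)).
  assert (hbs : 0 < bs) by (apply hhs_pos; auto).
  set (K := E * Ac * d ^ 3 / (eps0 * A * L)).
  assert (hK : 0 < K).
  { unfold K. apply Rdiv_lt_0_compat. apply Rmult_lt_0_compat. apply Rmult_lt_0_compat; auto.
    apply pow_lt; auto. apply Rmult_lt_0_compat; auto. apply Rmult_lt_0_compat; auto. }
  set (Vp := V_pull_in m E D Ac A L d eps0).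
  assert (hVp2 : Vp ^ 2 = K * bs).
  { unfold Vp, V_pull_in. fold al. rewrite kappa_hh by auto. fold bs.
    rewrite pow2_sqrt. unfold K. field. repeat split; lra.
    apply Rlt_le. replace (2 * E * Ac * d ^ 3 * (bs / 2) / (eps0 * A * L)) with (K * bs)
      by (unfold K; field; repeat split; lra). apply Rmult_lt_0_compat; auto. }
  assert (hVp : 0 < Vp).
  { unfold Vp, V_pull_in. apply sqrt_lt_R0. fold al. rewrite kappa_hh by auto. fold bs.
    replace (2 * E * Ac * d ^ 3 * (bs / 2) / (eps0 * A * L)) with (K * bs)
      by (unfold K; field; repeat split; lra). apply Rmult_lt_0_compat; auto. }
  assert (hbeK : be * K = V ^ 2).
  { unfold be, K. field. repeat split; lra. }
  fold Vp. assert (Ebs : bs = hh al (ys al)) by reflexivity. clearbody al be w bs K Vp.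
  assert (P1 : V < Vp -> exists x : R -> R, periodic_solution m E D Ac A L d eps0 V x).
  { intro hlt. destruct hV as [hV0|hV0].
    - apply (case_P m E D Ac A L d eps0 V al be w); auto.
      + assert (0 < V ^ 2) by (apply pow_lt; auto). nra.
      + rewrite <- Ebs. assert (V ^ 2 < Vp ^ 2) by nra. nra.
    - subst V. exists (fun _ => 0). apply zero_sol; auto. }
  split; [exact P1|split].
  - intro hle. destruct hle as [hlt|heq].
    + destruct (P1 hlt) as [x [hx _]]. exists x. exact hx.
    + apply (case_G m E D Ac A L d eps0 V al be w); auto.
      subst V. rewrite <- Ebs. nra.
  - intro hgt. apply (case_I m E D Ac A L d eps0 V al be w); auto.
    assert (Vp ^ 2 < V ^ 2) by nra. rewrite <- Ebs. nra.
Qed.
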